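(* In classical theory, with the bit as obit, the information content of every probability vector $\mathbf p=(p_1,\dots,p_d)$ equals its Shannon entropy: $I(\mathbf p)=H(\mathbf p)=-\sum_ip_i\log_2p_i$.
   Context: Classical theory as an OPT: a system is $\mathbb R^{d}$, states are substochastic vectors ($x_i\ge0$, $\sum_i x_i\le1$; normalized if the sum is 1), pure states are the basis vectors, effects are vectors with entries in $[0,1]$, transformations are substochastic matrices (channels: stochastic), parallel composition is the tensor product; the operational norm is the $\ell^1$ norm. A dilation of $\mathbf p$ is a joint probability vector on $\mathbb R^d\otimes\mathbb R^{d'}$ whose marginal is $\mathbf p$; a refinement of a state is a collection of substochastic vectors summing to it. Information content: a compression scheme is a pair of stochastic maps $\mathcal E:\mathbb R^{d^N}\to\mathbb R^{2^M}$, $\mathcal D:\mathbb R^{2^M}\to\mathbb R^{d^N}$; $E_{N,M,\varepsilon}(\mathbf p)$ is the set of schemes with $\sup_{d',\{\Psi_i\}}\sum_i\|((\mathcal D\mathcal E)\otimes I_{d'})\Psi_i-\Psi_i\|_1<\varepsilon$, over all ancillary dimensions $d'$ and refinements $\{\Psi_i\}$ of dilations of $\mathbf p^{\otimes N}$; $I(\mathbf p):=\lim_{\varepsilon\to0}\limsup_{N\to\infty}\min\{M:E_{N,M,\varepsilon}(\mathbf p)\ne\emptyset\}/N$. *)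

(* Defs.v *)
From HB Require Import structures.
From mathcomp Require Import all_boot all_order all_algebra.
From mathcomp Require Import all_classical all_reals all_analysis.
Set Implicit Arguments. Unset Strict Implicit. Unset Printing Implicit Defensive.
Import Order.TTheory GRing.Theory Num.Theory.
Import numFieldNormedType.Exports.
Local Open Scope classical_set_scope.
Local Open Scope ring_scope.

Section Classical.
Variable R : realType.

Definition prob_vec (d : nat) (p : 'I_d -> R) : Prop :=
  (forall i, 0 <= p i) /\ \sum_i p i = 1.

Definition shannon (d : nat) (p : 'I_d -> R) : R :=
  - \sum_i (if p i == 0 then 0 else p i * (ln (p i) / ln 2)).

(* A stochastic map (channel) from system X to system Y, as a kernel:
   K x y = probability of output basis state y on input basis state x. *)
Definition stochastic (X Y : finType) (K : X -> Y -> R) : Prop :=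
  (forall x y, 0 <= K x y) /\ (forall x, \sum_y K x y = 1).

Definition kcomp (X Y Z : finType) (E : X -> Y -> R) (D : Y -> Z -> R)
  : X -> Z -> R := fun x z => \sum_y E x y * D y z.

(* The system R^{d^N}: basis states are N-tuples of indices in 'I_d.
   p^{\otimes N} on it. *)
Definition tsys (d N : nat) : finType := {ffun 'I_N -> 'I_d}.
Definition tpow (d N : nat) (p : 'I_d -> R) : tsys d N -> R :=
  fun x => \prod_(k < N) p (x k).

Definition bsys (M : nat) : finType := 'I_(2 ^ M).

(* Psi (a vector on X (x) R^d') is a dilation of q: a joint probability
   vector whose marginal on X is q. *)
Definition dilation (X : finType) (d' : nat) (q : X -> R)
  (Psi : X -> 'I_d' -> R) : Prop :=
  (forall x a, 0 <= Psi x a) /\ \sum_x \sum_a Psi x a = 1 /\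
  (forall x, \sum_a Psi x a = q x).

Definition refinement (X : finType) (d' k : nat) (Psi : X -> 'I_d' -> R)
  (Psis : 'I_k -> X -> 'I_d' -> R) : Prop :=
  (forall i x a, 0 <= Psis i x a) /\
  (forall i, \sum_x \sum_a Psis i x a <= 1) /\
  (forall x a, \sum_i Psis i x a = Psi x a).

Definition refinement_error (X : finType) (d' k : nat) (T : X -> X -> R)
  (Psis : 'I_k -> X -> 'I_d' -> R) : R :=
  \sum_i \sum_y \sum_a `| \sum_x T x y * Psis i x a - Psis i y a |.

Definition error_values (X : finType) (q : X -> R) (T : X -> X -> R)
  : set R :=
  [set r | exists (d' k : nat) (Psi : X -> 'I_d' -> R)
             (Psis : 'I_k -> X -> 'I_d' -> R),
     dilation q Psi /\ refinement Psi Psis /\ r = refinement_error T Psis].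

Definition schemes (d : nat) (p : 'I_d -> R) (N M : nat) (eps : R)
  : set ((tsys d N -> bsys M -> R) * (bsys M -> tsys d N -> R)) :=
  [set ED | stochastic ED.1 /\ stochastic ED.2 /\
     (ereal_sup [set r%:E | r in error_values (@tpow d N p) (kcomp ED.1 ED.2)]
        < eps%:E)%E].

(* min {M : E_{N,M,eps}(p) <> empty} (as an extended real; +oo if empty). *)
Definition min_bits (d : nat) (p : 'I_d -> R) (N : nat) (eps : R) : \bar R :=
  ereal_inf [set (M%:R)%:E | M in [set M | @schemes d p N M eps !=set0]].

Definition rate (d : nat) (p : 'I_d -> R) (eps : R) : \bar R :=
  limn_esup (fun N : nat => (@min_bits d p N eps * (N%:R^-1)%:E)%E).

End Classical.

(* Main.v *)
From Pilot Require Import Defs.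
From HB Require Import structures.
From mathcomp Require Import all_boot all_order all_algebra.
From mathcomp Require Import all_classical all_reals all_analysis.
From mathcomp Require Import lra.
Import Order.TTheory GRing.Theory Num.Theory.
Import numFieldNormedType.Exports.
Import Pilot.Defs.
Local Open Scope classical_set_scope.
Local Open Scope ring_scope.

Lemma rowdev (R : realType) (X : finType) (T : X -> X -> R) (x : X) :
  stochastic T -> \sum_y `|T x y - (y == x)%:R| = 2 * (1 - T x x).
Proof.
move=> [T0 T1].
have H := T1 x; rewrite (bigD1 x) //= in H.
rewrite (bigD1 x) //= eqxx.
rewrite (eq_bigr (fun y => T x y)); last first.
  by move=> y /negbTE ->; rewrite subr0 ger0_norm.
have Tle : T x x <= 1 by rewrite -H lerDl sumr_ge0.
rewrite ler0_norm ?subr_le0 //.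
have -> : \sum_(i | i != x) T x i = 1 - T x x by rewrite -H addrAC subrr add0r.
by rewrite opprB mulr2n mulrDl mul1r.
Qed.

Lemma unit_sum (R : realType) (X : finType) (y : X) (f : X -> R) :
  \sum_x (y == x)%:R * f x = f y.
Proof.
rewrite (bigD1 y) //= eqxx mul1r big1 ?addr0 // => x.
by rewrite eq_sym => /negbTE ->; rewrite mul0r.
Qed.

Lemma err_ub (R : realType) (X : finType) (d' k : nat) (q : X -> R)
  (T : X -> X -> R) (Psi : X -> 'I_d' -> R) (Psis : 'I_k -> X -> 'I_d' -> R) :
  stochastic T -> dilation q Psi -> refinement Psi Psis ->
  refinement_error T Psis <= 2 * \sum_x q x * (1 - T x x).
Proof.
move=> sT [_ [_ Hm]] [P0 [_ Ps]].
rewrite /refinement_error.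
apply: (@le_trans _ _ (\sum_i \sum_y \sum_a \sum_x
    `|T x y - (y == x)%:R| * Psis i x a)).
  apply: ler_sum => i _; apply: ler_sum => y _; apply: ler_sum => a _.
  have -> : \sum_x T x y * Psis i x a - Psis i y a =
            \sum_x (T x y - (y == x)%:R) * Psis i x a.
    under [RHS]eq_bigr do rewrite mulrBl.
    by rewrite sumrB unit_sum.
  apply: le_trans (ler_norm_sum _ _ _) _.
  by apply: ler_sum => x _; rewrite normrM (ger0_norm (P0 _ _ _)).
rewrite exchange_big /=.
rewrite (eq_bigr (fun y => \sum_x \sum_i \sum_a
    `|T x y - (y == x)%:R| * Psis i x a)); last first.
  move=> y _; rewrite [RHS]exchange_big /=; apply: eq_bigr => i _.
  by rewrite exchange_big.
rewrite exchange_big /= mulr_sumr; apply: ler_sum => x _.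
rewrite mulrCA -rowdev // mulr_sumr.
apply: ler_sum => y _.
rewrite exchange_big /= -Hm mulr_suml; apply: ler_sum => a _.
rewrite -Ps mulr_suml; apply: ler_sum => i _.
by rewrite mulrC.
Qed.

Lemma q_le1 (R : realType) (X : finType) (q : X -> R) (x : X) :
  (forall x, 0 <= q x) -> \sum_x q x = 1 -> q x <= 1.
Proof.
move=> q0 q1; rewrite -q1 (bigD1 x) //= lerDl.
by apply: sumr_ge0 => y _.
Qed.

Lemma err_pure (R : realType) (X : finType) (q : X -> R) (T : X -> X -> R) :
  (forall x, 0 <= q x) -> \sum_x q x = 1 -> stochastic T ->
  error_values q T (2 * \sum_x q x * (1 - T x x)).
Proof.
move=> q0 q1 sT.
pose Psi := fun (x : X) (a : 'I_1) => q x.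
pose Psis := fun (i : 'I_#|X|) (x : X) (a : 'I_1) => (x == enum_val i)%:R * q x.
exists 1%N, #|X|, Psi, Psis; split; [|split].
- split; first by move=> x a; exact: q0.
  split; last by move=> x; rewrite big_ord1.
  by rewrite -q1; apply: eq_bigr => x _; rewrite big_ord1.
- split; first by move=> i x a; rewrite mulr_ge0 // ler0n.
  split.
    move=> i; rewrite (eq_bigr (fun x => (enum_val i == x)%:R * q x)).
      by rewrite unit_sum q_le1.
    by move=> x _; rewrite big_ord1 eq_sym.
  move=> x a; rewrite /Psis /Psi (bigD1 (enum_rank x)) //= enum_rankK eqxx mul1r.
  rewrite big1 ?addr0 // => i Hi; case: eqP => [E|]; last by rewrite mul0r.
  by move: Hi; rewrite E enum_valK eqxx.
rewrite /refinement_error.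
rewrite (eq_bigr (fun i => q (enum_val i) * (2 * (1 - T (enum_val i) (enum_val i))))).
  rewrite (reindex (@enum_val X X)) /=; last exact: onW_bij _ (enum_val_bij X).
  by rewrite mulr_sumr; apply: eq_bigr => x _; rewrite mulrCA.
move=> i _; rewrite -rowdev // mulr_sumr; apply: eq_bigr => y _.
rewrite big_ord1 /Psis.
rewrite (eq_bigr (fun x => (enum_val i == x)%:R * (T x y * q x))); last first.
  by move=> x _; rewrite mulrCA eq_sym.
rewrite unit_sum.
have -> : (y == enum_val i)%:R * q y = (y == enum_val i)%:R * q (enum_val i).
  by case: eqP => [->|]; rewrite ?mul0r.
have E : forall a b c : R, a * c - b * c = c * (a - b) by move=> a b c; rewrite mulrBr !(mulrC c).
by rewrite E normrM (ger0_norm (q0 _)).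
Qed.

Lemma sup_err (R : realType) (X : finType) (q : X -> R) (T : X -> X -> R) :
  (forall x, 0 <= q x) -> \sum_x q x = 1 -> stochastic T ->
  ereal_sup [set r%:E | r in error_values q T] =
  (2 * \sum_x q x * (1 - T x x))%:E.
Proof.
move=> q0 q1 sT; apply/eqP; rewrite eq_le; apply/andP; split.
  apply: ge_ereal_sup => _ [r [d' [k [Psi [Psis [Hd [Hr ->]]]]]] <-].
  by rewrite lee_fin; apply: err_ub Hd Hr.
by apply: ereal_sup_ubound; exists (2 * \sum_x q x * (1 - T x x)) => //; apply: err_pure.
Qed.

Lemma prod_sum (R : realType) (d N : nat) (F : 'I_N -> 'I_d -> R) :
  \sum_(x : tsys d N) \prod_(k < N) F k (x k) = \prod_(k < N) \sum_j F k j.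
Proof. by rewrite bigA_distr_bigA. Qed.

Lemma tpow_sum (R : realType) (d N : nat) (p : 'I_d -> R) :
  \sum_j p j = 1 -> \sum_x @tpow R d N p x = 1.
Proof.
move=> p1; rewrite /tpow (@prod_sum R d N (fun _ j => p j)) big1 // => k _; exact: p1.
Qed.

Lemma tpow_ge0 (R : realType) (d N : nat) (p : 'I_d -> R) x :
  (forall j, 0 <= p j) -> 0 <= @tpow R d N p x.
Proof. by move=> p0; apply: prodr_ge0 => k _. Qed.

Lemma prod_if (R : realType) (N : nat) (k : 'I_N) (f : 'I_N -> R) :
  \prod_(m < N) (if m == k then f m else 1) = f k.
Proof.
rewrite (bigD1 k) //= eqxx big1 ?mulr1 // => m /negbTE -> //.
Qed.

Lemma tvariance (R : realType) (d N : nat) (p : 'I_d -> R) (Y : 'I_d -> R) :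
  \sum_j p j = 1 -> \sum_j p j * Y j = 0 ->
  \sum_x @tpow R d N p x * (\sum_k Y (x k)) ^+ 2 = N%:R * \sum_j p j * Y j ^+ 2.
Proof.
move=> p1 pY.
pose G (k l m : 'I_N) (j : 'I_d) :=
  p j * (if m == k then Y j else 1) * (if m == l then Y j else 1).
have E1 : forall x : tsys d N, @tpow R d N p x * (\sum_k Y (x k)) ^+ 2 =
    \sum_k \sum_l \prod_m G k l m (x m).
  move=> x; rewrite expr2 mulr_suml mulr_sumr; apply: eq_bigr => k _.
  rewrite mulr_sumr mulr_sumr; apply: eq_bigr => l _.
  rewrite /G !big_split /= !prod_if /tpow.
  by rewrite mulrA.
under eq_bigr do rewrite E1.
rewrite exchange_big /=.
rewrite (eq_bigr (fun k => \sum_j p j * Y j ^+ 2)); last first.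
  move=> k _; rewrite [LHS]exchange_big /=.
  rewrite (bigD1 k) //= [X in _ + X]big1 ?addr0; last first.
    move=> l lk; rewrite (@prod_sum R d N (G k l)) (bigD1 k) //=.
    have -> : \sum_j G k l k j = 0.
      rewrite -[RHS]pY; apply: eq_bigr => j _.
      by rewrite /G eqxx eq_sym (negbTE lk) mulr1.
    by rewrite mul0r.
  rewrite (@prod_sum R d N (G k k)) (bigD1 k) //= [X in _ * X]big1 ?mulr1.
    by apply: eq_bigr => j _; rewrite /G eqxx expr2 mulrA.
  move=> m /negbTE mk; rewrite -[RHS]p1; apply: eq_bigr => j _.
  by rewrite /G mk !mulr1.
by rewrite sumr_const card_ord mulr_natl.
Qed.

Definition ell {R : realType} {d : nat} (p : 'I_d -> R) (j : 'I_d) : R :=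
  if p j == 0 then 0 else - (ln (p j) / ln 2).

Definition sL {R : realType} {d N : nat} (p : 'I_d -> R) (x : tsys d N) : R :=
  \sum_k ell p (x k).

Lemma shannonE (R : realType) (d : nat) (p : 'I_d -> R) :
  shannon p = \sum_j p j * ell p j.
Proof.
rewrite /shannon -sumrN; apply: eq_bigr => j _; rewrite /ell.
by case: eqP => _; rewrite ?mulr0 ?oppr0 // mulrN.
Qed.

Lemma ln2_gt0 (R : realType) : 0 < ln (2 : R).
Proof. by apply: ln_gt0; rewrite ltr1n. Qed.

Lemma tpow_exp (R : realType) (d N : nat) (p : 'I_d -> R) (x : tsys d N) :
  (forall j, 0 <= p j) ->
  (forall k, p (x k) != 0) ->
  @tpow R d N p x = expR (- (ln 2 * sL p x)).
Proof.
move=> p0 pn0.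
have -> : - (ln 2 * sL p x) = \sum_k ln (p (x k)).
  rewrite /sL mulr_sumr -sumrN; apply: eq_bigr => k _.
  rewrite /ell (negbTE (pn0 k)) mulrN opprK mulrC -mulrA mulVf ?mulr1 //.
  by rewrite gt_eqF // ln2_gt0.
rewrite expR_sum /tpow; apply: eq_bigr => k _.
by rewrite lnK // posrE lt_neqAle eq_sym pn0 p0.
Qed.

Lemma tpow_le_exp (R : realType) (d N : nat) (p : 'I_d -> R) (x : tsys d N) :
  (forall j, 0 <= p j) ->
  @tpow R d N p x <= expR (- (ln 2 * sL p x)).
Proof.
move=> p0.
have [/existsP[k /eqP pk]|] := boolP [exists k, p (x k) == 0].
  rewrite /tpow (bigD1 k) //= pk mul0r; exact: ltW (expR_gt0 _).
move=> /existsPn pn0; rewrite tpow_exp //.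
Qed.

Lemma cheb (R : realType) (d N : nat) (p : 'I_d -> R) (del : R) :
  prob_vec p -> 0 <= del ->
  (N%:R * del) ^+ 2 *
    \sum_(x : tsys d N | N%:R * del <= `|sL p x - N%:R * shannon p|) @tpow R d N p x
  <= N%:R * \sum_j p j * (ell p j - shannon p) ^+ 2.
Proof.
move=> [p0 p1] del0.
set h := shannon p.
have pY : \sum_j p j * (ell p j - h) = 0.
  under eq_bigr do rewrite mulrBr.
  by rewrite sumrB -mulr_suml p1 mul1r /h shannonE subrr.
rewrite -(@tvariance R d N p _ p1 pY).
have E : forall x : tsys d N, sL p x - N%:R * h = \sum_k (ell p (x k) - h).
  by move=> x; rewrite sumrB sumr_const card_ord mulr_natl.
rewrite mulr_sumr.
apply: (@le_trans _ _ (\sum_(x | N%:R * del <= `|sL p x - N%:R * h|)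
   @tpow R d N p x * (\sum_k (ell p (x k) - h)) ^+ 2)).
  apply: ler_sum => x Hx; rewrite mulrC ler_wpM2l ?tpow_ge0 //.
  rewrite -E -[leRHS]real_normK ?num_real // !expr2.
  have H0 : 0 <= N%:R * del by rewrite mulr_ge0.
  by apply: ler_pM.
rewrite [leRHS](bigID (fun x : tsys d N => N%:R * del <= `|sL p x - N%:R * h|)) /= lerDl.
by apply: sumr_ge0 => x _; rewrite mulr_ge0 ?tpow_ge0 ?sqr_ge0.
Qed.

Lemma sum_ind (R : realType) (X : finType) (a : X) :
  \sum_x ((x == a)%:R : R) = 1.
Proof.
rewrite (bigD1 a) //= eqxx big1 ?addr0 // => x /negbTE -> //.
Qed.

Lemma det_scheme (R : realType) (X : finType) (x0 : X) (M : nat) (S : {set X}) :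
  (#|S| <= 2 ^ M)%N ->
  exists (E : X -> bsys M -> R) (D : bsys M -> X -> R),
    stochastic E /\ stochastic D /\ (forall x, kcomp E D x x <= 1) /\
    forall x, x \in S -> kcomp E D x x = 1.
Proof.
move=> HS.
pose s := enum S.
have m0lt : (0 < 2 ^ M)%N by rewrite expn_gt0.
pose m0 : bsys M := Ordinal m0lt.
pose enc (x : X) : bsys M := insubd m0 (index x s).
exists (fun x (m : bsys M) => (m == enc x)%:R), (fun (m : bsys M) y => (y == nth x0 s m)%:R).
have sE : stochastic (fun (x : X) (m : bsys M) => ((m == enc x)%:R : R)).
  by split => [x m|x]; [rewrite ler0n|rewrite sum_ind].
have sD : stochastic (fun (m : bsys M) (y : X) => ((y == nth x0 s m)%:R : R)).
  by split => [x m|x]; [rewrite ler0n|rewrite sum_ind].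
have K : forall x, kcomp (fun x (m : bsys M) => ((m == enc x)%:R : R))
           (fun (m : bsys M) y => (y == nth x0 s m)%:R) x x = (x == nth x0 s (enc x))%:R.
  move=> x; rewrite /kcomp.
  rewrite (eq_bigr (fun m => (enc x == m)%:R * (x == nth x0 s m)%:R)).
    by rewrite unit_sum.
  by move=> m _; rewrite eq_sym.
split=> //; split=> //; split.
  by move=> x; rewrite K; case: eqP.
move=> x xS; rewrite K.
have xs : x \in s by rewrite mem_enum.
have lt : (index x s < 2 ^ M)%N.
  by apply: leq_trans HS; rewrite cardE index_mem.
by rewrite /enc val_insubd lt nth_index // eqxx.
Qed.

Lemma kcomp_stoch (R : realType) (X Y Z : finType) (E : X -> Y -> R) (D : Y -> Z -> R) :
  stochastic E -> stochastic D -> stochastic (kcomp E D).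
Proof.
move=> [E0 E1] [D0 D1]; split.
  by move=> x z; apply: sumr_ge0 => y _; rewrite mulr_ge0.
move=> x; rewrite /kcomp exchange_big /= -(E1 x); apply: eq_bigr => y _.
by rewrite -mulr_sumr D1 mulr1.
Qed.

Lemma prob_d_gt0 (R : realType) (d : nat) (p : 'I_d -> R) : prob_vec p -> (0 < d)%N.
Proof.
case: d p => [|d] p [_ p1] //; move: p1; rewrite big_ord0 => /eqP.
by rewrite eq_sym oner_eq0.
Qed.

Lemma tpow_pos_nz (R : realType) (d N : nat) (p : 'I_d -> R) (x : tsys d N) :
  0 < @tpow R d N p x -> forall k, p (x k) != 0.
Proof.
move=> qp k; apply/eqP => pk; move: qp; rewrite /tpow (bigD1 k) //= pk mul0r.
by rewrite ltxx.
Qed.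

Lemma achieve (R : realType) (d N M : nat) (p : 'I_d -> R) (eps c : R) :
  prob_vec p -> expR (ln 2 * c) <= (2 ^ M)%:R ->
  2 * \sum_(x : tsys d N | c < sL p x) @tpow R d N p x < eps ->
  @schemes R d p N M eps !=set0.
Proof.
move=> pv Hc Heps; have [p0 p1] := pv.
set q := @tpow R d N p.
have q0 : forall x, 0 <= q x by move=> x; exact: tpow_ge0.
have q1 : \sum_x q x = 1 by exact: tpow_sum.
have j0 : 'I_d by exists 0%N; exact: prob_d_gt0 pv.
pose x0 : tsys d N := [ffun _ => j0].
pose S : {set tsys d N} := finset (fun x : tsys d N => (0 < q x) && (sL p x <= c)).
have HS : (#|S| <= 2 ^ M)%N.
  rewrite -(ler_nat R); apply: le_trans Hc.
  have H1 : #|S|%:R * expR (- (ln 2 * c)) <= 1.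
    have -> : #|S|%:R * expR (- (ln 2 * c)) = \sum_(x in S) expR (- (ln 2 * c)).
      by rewrite sumr_const mulr_natl.
    rewrite -[leRHS]q1.
    apply: le_trans (_ : \sum_(x in S) q x <= _); last first.
      by rewrite [leRHS](bigID (fun x => x \in S)) /= lerDl sumr_ge0.
    apply: ler_sum => x; rewrite inE => /andP[qp sc].
    rewrite /q tpow_exp //; last exact: tpow_pos_nz.
    by rewrite ler_expR lerN2 ler_pM2l // ln2_gt0.
  by move: H1; rewrite expRN ler_pdivrMr ?expR_gt0 // mul1r.
have [E [D [sE [sD [T1 TS]]]]] := @det_scheme R _ x0 M S HS.
exists (E, D); split; [done|split; first done].
rewrite /= (@sup_err R _ q _ q0 q1 (@kcomp_stoch R _ _ _ E D sE sD)) lte_fin.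
apply: le_lt_trans Heps; rewrite ler_wpM2l //.
rewrite [leRHS]big_mkcond; apply: ler_sum => x _.
have [t0 _] := @kcomp_stoch R _ _ _ E D sE sD.
have := t0 x x; have := T1 x.
set t := kcomp E D x x => t1 t0'.
case: ltP => [lt|le].
  by rewrite mulrBr mulr1 gerBl mulr_ge0.
have := q0 x; rewrite le_eqVlt => /orP[/eqP <-|qp]; first by rewrite mul0r.
by rewrite /t TS ?subrr ?mulr0 // inE qp le.
Qed.

Lemma stoch_le1 (R : realType) (X Y : finType) (K : X -> Y -> R) x y :
  stochastic K -> K x y <= 1.
Proof.
move=> [K0 K1]; rewrite -(K1 x) (bigD1 y) //= lerDl.
by apply: sumr_ge0 => z _.
Qed.

Lemma converse (R : realType) (d N M : nat) (p : 'I_d -> R) (eps c : R) :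
  prob_vec p -> @schemes R d p N M eps !=set0 ->
  1 - eps / 2 < \sum_(x : tsys d N | sL p x < c) @tpow R d N p x
                + expR (- (ln 2 * c)) * (2 ^ M)%:R.
Proof.
move=> pv [[E D] [/= sE [sD Hs]]]; have [p0 p1] := pv.
set q := @tpow R d N p.
have q0 : forall x, 0 <= q x by move=> x; exact: tpow_ge0.
have q1 : \sum_x q x = 1 by exact: tpow_sum.
have sT := @kcomp_stoch R _ _ _ E D sE sD.
move: Hs; rewrite (@sup_err R _ q _ q0 q1 sT) lte_fin.
set T := kcomp E D.
have -> : \sum_x q x * (1 - T x x) = 1 - \sum_x q x * T x x.
  by rewrite -[in RHS]q1 -sumrB; apply: eq_bigr => x _; rewrite mulrBr mulr1.
move=> Hlt.
have H1 : 1 - eps / 2 < \sum_x q x * T x x.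
  rewrite ltrBlDr -ltrBlDl; rewrite -(ltr_pM2l (_ : 0 < 2)) // mulrCA divff ?mulr1 //.
have HT : \sum_x T x x <= (2 ^ M)%:R.
  apply: (@le_trans _ _ (\sum_x \sum_(m : bsys M) D m x)).
    apply: ler_sum => x _; apply: ler_sum => m _.
    rewrite ler_piMl //; [exact: sD.1|exact: stoch_le1].
  rewrite exchange_big /= (eq_bigr (fun _ => 1)); last by move=> m _; exact: sD.2.
  by rewrite sumr_const card_ord.
apply: lt_le_trans H1 _.
apply: (@le_trans _ _ (\sum_x ((if sL p x < c then q x else 0)
                              + expR (- (ln 2 * c)) * T x x))).
  apply: ler_sum => x _.
  have T0 : 0 <= T x x by exact: sT.1.
  have T1 : T x x <= 1 by exact: stoch_le1.
  case: ltP => [lt|le].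
    by rewrite -[leLHS]addr0 lerD ?mulr_ge0 // ?ler_piMr // ltW // expR_gt0.
  rewrite add0r ler_wpM2r //; apply: le_trans (@tpow_le_exp R d N p x p0) _.
  by rewrite ler_expR lerN2 ler_pM2l // ln2_gt0.
rewrite big_split /= -big_mkcond lerD2l -mulr_sumr ler_wpM2l //.
Qed.

Lemma ell_ge0 (R : realType) (d : nat) (p : 'I_d -> R) j :
  prob_vec p -> 0 <= ell p j.
Proof.
move=> [p0 p1]; rewrite /ell; case: eqP => // _.
rewrite oppr_ge0 pmulr_lle0 ?invr_gt0 ?ln2_gt0 // ln_le0 //.
by rewrite -p1 (bigD1 j) //= lerDl sumr_ge0.
Qed.

Lemma shannon_ge0 (R : realType) (d : nat) (p : 'I_d -> R) :
  prob_vec p -> 0 <= shannon p.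
Proof.
move=> pv; rewrite shannonE; apply: sumr_ge0 => j _.
by rewrite mulr_ge0 ?ell_ge0 //; case: pv.
Qed.

Lemma pow2E (R : realType) (M : nat) : ((2 ^ M)%:R : R) = expR (ln 2 * M%:R).
Proof. by rewrite mulrC expRM_natl lnK ?posrE // natrX. Qed.

Lemma cheb2 (R : realType) (d N : nat) (p : 'I_d -> R) (del : R) (P : pred (tsys d N)) :
  prob_vec p -> 0 < del -> (0 < N)%N ->
  (forall x, P x -> N%:R * del <= `|sL p x - N%:R * shannon p|) ->
  N%:R * del ^+ 2 * \sum_(x | P x) @tpow R d N p x
  <= \sum_j p j * (ell p j - shannon p) ^+ 2.
Proof.
move=> pv del0 N0 HP.
have := @cheb R d N p del pv (ltW del0).
have Hs : \sum_(x | P x) @tpow R d N p x <=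
   \sum_(x : tsys d N | N%:R * del <= `|sL p x - N%:R * shannon p|) @tpow R d N p x.
  rewrite [leRHS]big_mkcond [leLHS]big_mkcond; apply: ler_sum => x _.
  case: ifP => Px; first by rewrite HP.
  by case: ifP => // _; rewrite tpow_ge0 //; case: pv.
have N0' : 0 < (N%:R : R) by rewrite ltr0n.
move=> H; rewrite -(ler_pM2l N0') mulrA.
apply: le_trans H; rewrite exprMn expr2 -!mulrA.
do 2 (apply: ler_wpM2l; first by rewrite ler0n).
by do 2 (apply: ler_wpM2l; first exact: ltW).
Qed.

Lemma upper (R : realType) (d : nat) (p : 'I_d -> R) (eps del : R) :
  prob_vec p -> 0 < eps -> 0 < del ->
  \forall N \near \oo, (min_bits p N eps <= (N%:R * (shannon p + del) + 1)%:E)%E.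
Proof.
move=> pv e0 d0.
set h := shannon p; set s := \sum_j p j * (ell p j - h) ^+ 2.
have s0 : 0 <= s by apply: sumr_ge0 => j _; rewrite mulr_ge0 ?sqr_ge0 //; case: pv.
have h0 : 0 <= h by exact: shannon_ge0.
have K0 : 0 < del ^+ 2 * eps by rewrite mulr_gt0 ?exprn_gt0.
near=> N.
have N0 : (0 < N)%N by near: N; exact: nbhs_infty_gt.
have Hs : 2 * s < N%:R * del ^+ 2 * eps.
  have : 2 * s / (del ^+ 2 * eps) < N%:R.
    by near: N; exact: nbhs_infty_gtr.
  by rewrite ltr_pdivrMr // mulrA.
set c := N%:R * (h + del).
have c0 : 0 <= c by rewrite mulr_ge0 ?ler0n ?addr_ge0 // ltW.
have /andP[tl tu] := truncn_itv c0.
set M := (Num.truncn c).+1.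
have HM : @schemes R d p N M eps !=set0.
  apply: (@achieve R d N M p eps c) => //.
    by rewrite pow2E ler_expR ler_pM2l ?ln2_gt0 //; exact: ltW.
  have := @cheb2 R d N p del (fun x => c < sL p x) pv d0 N0.
  have side : forall x : tsys d N, c < sL p x -> N%:R * del <= `|sL p x - N%:R * h|.
    move=> x cx; apply: le_trans _ (ler_norm _).
    by move: cx; rewrite /c mulrDr; lra.
  move=> /(_ side) H.
  move: Hs H; rewrite -/h.
  set Q := \sum_(x | c < sL p x) _.
  set K := N%:R * del ^+ 2.
  have Kp : 0 < K by rewrite mulr_gt0 ?ltr0n ?exprn_gt0.
  rewrite -/s; move: Kp; clear -e0; clearbody K Q s; move=> *; nra.
apply: le_trans (_ : (M%:R)%:E <= _)%E.
  by apply: ereal_inf_lbound; exists M.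
by rewrite lee_fin /M -addn1 natrD lerD2r.
Unshelve. all: by end_near. Qed.

Lemma lower (R : realType) (d : nat) (p : 'I_d -> R) (eps del : R) :
  prob_vec p -> 0 < eps -> eps <= 2^-1 -> 0 < del ->
  \forall N \near \oo, ((N%:R * (shannon p - del) - 1)%:E <= min_bits p N eps)%E.
Proof.
move=> pv e0 e1 d0.
set h := shannon p; set s := \sum_j p j * (ell p j - h) ^+ 2.
have s0 : 0 <= s by apply: sumr_ge0 => j _; rewrite mulr_ge0 ?sqr_ge0 //; case: pv.
near=> N.
have N0 : (0 < N)%N by near: N; exact: nbhs_infty_gt.
have Hs : 4 * s < N%:R * del ^+ 2.
  have : 4 * s / del ^+ 2 < N%:R.
    by near: N; exact: nbhs_infty_gtr.
  by rewrite ltr_pdivrMr // exprn_gt0.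
set c := N%:R * (h - del).
apply: le_ereal_inf_tmp => _ [M HM <-]; rewrite lee_fin.
have H := @converse R d N M p eps c pv HM.
have := @cheb2 R d N p del (fun x => sL p x < c) pv d0 N0.
have side : forall x : tsys d N, sL p x < c -> N%:R * del <= `|sL p x - N%:R * h|.
  move=> x cx; rewrite -normrN; apply: le_trans _ (ler_norm _).
  by move: cx; rewrite /c mulrBr; lra.
move=> /(_ side) HQ.
move: H HQ Hs; rewrite -/h -/s pow2E -expRD.
have E2 : expR (- ln 2) = 2^-1 :> R by rewrite expRN lnK // posrE.
set Q := \sum_(x | sL p x < c) _.
set K := N%:R * del ^+ 2.
have Kp : 0 < K by rewrite mulr_gt0 ?ltr0n ?exprn_gt0.
set X := expR _ => H HQ Hs.
have : 2^-1 < X by move: Kp H HQ Hs e1; clear -s0; clearbody K Q X s; move=> *; nra.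
rewrite -E2 /X ltr_expR => H'.
have L0 := @ln2_gt0 R.
move: H' L0; clearbody c; set L := ln 2; clearbody L; move=> *; nra.
Unshelve. all: by end_near. Qed.

Lemma fin_between (R : realType) (a b : R) (x : \bar R) :
  (a%:E <= x)%E -> (x <= b%:E)%E -> x = (fine x)%:E /\ a <= fine x <= b.
Proof.
by case: x => [r| |] //= ar rb; split => //; apply/andP; split; rewrite -lee_fin.
Qed.

Lemma rate_eq (R : realType) (d : nat) (p : 'I_d -> R) (eps : R) :
  prob_vec p -> 0 < eps -> eps <= 2^-1 -> rate p eps = (shannon p)%:E.
Proof.
move=> pv e0 e1.
set h := shannon p.
set u := fun N : nat => (min_bits p N eps * (N%:R^-1)%:E)%E.
suff Hu : u @ \oo --> h%:E by exact: (cvg_limn_einf_sup Hu).2.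
have key : forall del, 0 < del -> \forall N \near \oo,
    (0 < N)%N /\ exists m : R, u N = (m / N%:R)%:E /\
      N%:R * (h - del) - 1 <= m <= N%:R * (h + del) + 1.
  move=> del d0; near=> N; split; first by near: N; exact: nbhs_infty_gt.
  have Hl : ((N%:R * (h - del) - 1)%:E <= min_bits p N eps)%E.
    by near: N; exact: lower.
  have Hup : (min_bits p N eps <= (N%:R * (h + del) + 1)%:E)%E.
    by near: N; exact: upper.
  have [E Hb] := @fin_between R _ _ _ Hl Hup.
  by exists (fine (min_bits p N eps)); split => //; rewrite /u E -EFinM.
apply/fine_cvgP; split.
  have := key 1 ltr01; apply: filterS => N [_ [m [-> _]]] //.
apply/cvgrPdist_le => e ep.
have := key (e / 2) (divr_gt0 ep (ltr0Sn _ 1)).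
have := nbhs_infty_gtr (2 / e).
move=> H1 H2; near=> N.
rewrite [X in `|_ - X|]/=.
have [N0 [m [-> /andP[ml mu]]]] : (0 < N)%N /\ exists m : R, u N = (m / N%:R)%:E /\
      N%:R * (h - e / 2) - 1 <= m <= N%:R * (h + e / 2) + 1 by near: N.
have NL : 2 / e < N%:R by near: N.
rewrite /= .
have Np : 0 < (N%:R : R) by rewrite ltr0n.
have Ne : 2 <= N%:R * e by move: NL; rewrite ltr_pdivrMr // mulrC => /ltW.
set y := m / N%:R.
have my : m = y * N%:R by rewrite /y mulfVK // gt_eqF.
rewrite my in ml mu.
move: Np Ne ml mu; clearbody y; clear my; set n : R := N%:R; clearbody n.
move=> *; rewrite ler_norml; apply/andP; split; nra.
Unshelve. all: by end_near. Qed.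

Theorem mainTheorem15 (R : realType) (d : nat) (p : 'I_d -> R) :
  prob_vec p ->
  rate p eps @[eps --> 0^'+] --> (shannon p)%:E.
Proof.
move=> pv; apply: cvg_near_cst; near=> eps.
apply: rate_eq.
- exact: pv.
- by near: eps; exact: nbhs_right_gt.
- by near: eps; apply: nbhs_right_le; rewrite invr_gt0.
Unshelve. all: by end_near. Qed.
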